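(* Let $X=(S,g_1^0,g_2^0,g_3^0,D_1,D_2,D_3,\xi)\in\mathrm{MC}_{\mathrm{normal}}$ with associated $u>0$, and set $D_1'=D_1-\tfrac{2g_3^4}{u-2}D_2+\tfrac{2u\,g_2^3}{2u-1}D_3$, where $g_3^4=-c_{31}^1+D_3(\xi)$ and $g_2^3=-c_{12}^1-D_2(\xi)$. (i) If $0<u<1$ and $u\neq\tfrac12$ everywhere, then with $\bar u=\tfrac1u-1$, $$T(X)=\Big(S,\tfrac12,-\tfrac12(1+\bar u),-\tfrac12(1+\tfrac1{\bar u}),\tfrac1{1-u}D_2,\tfrac1{1-u}D_3,\tfrac1{1-u}D_1',\xi+\log\tfrac1{1-u}\Big)\in\mathrm{MC}_{\mathrm{pre}}.$$ (ii) If $u>1$ and $u\neq2$ everywhere, then with $\bar u=u-1$, $$T(X)=\Big(S,\tfrac12,-\tfrac12(1+\bar u),-\tfrac12(1+\tfrac1{\bar u}),\tfrac u{u-1}D_3,\tfrac u{u-1}D_2,\tfrac u{u-1}D_1',\xi+\log\tfrac u{u-1}\Big)\in\mathrm{MC}_{\mathrm{pre}}.$$ Consequently $\mathcal{B}(X)=\mathcal{N}(T(X))$, defined whenever $\mathcal{N}(T(X))$ is defined, is a partial map $\mathcal{B}:\mathrm{MC}_{\mathrm{normal}}\nrightarrow\mathrm{MC}_{\mathrm{normal}}$.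
   Context: ''Cyclic $(i,j,k)$'' means $(i,j,k)\in\{(1,2,3),(2,3,1),(3,1,2)\}$. Let $S$ be a smooth manifold diffeomorphic to $\mathbb{R}^3$ and $D_1,D_2,D_3$ a frame of vector fields on $S$; its structure functions $c_{jk}^i\in C^\infty(S,\mathbb{R})$ are defined by $[D_j,D_k]=\sum_{i=1}^3c_{jk}^iD_i$. $\mathrm{MC}_{\mathrm{pre}}$ is the set of tuples $(S,g_1^0,g_2^0,g_3^0,D_1,D_2,D_3,\xi)$ with $g_i^0,\xi\in C^\infty(S,\mathbb{R})$ satisfying (E1) $0=g_2^0g_3^0+g_3^0g_1^0+g_1^0g_2^0$, and (E2) $0=D_i(g_j^0+g_k^0)+c_{ij}^j(g_i^0-g_j^0)+c_{ik}^k(g_i^0-g_k^0)-2D_i(\xi)g_i^0$ for all cyclic $(i,j,k)$. $\mathrm{MC}_{\mathrm{normal}}\subset\mathrm{MC}_{\mathrm{pre}}$ consists of the tuples with $(g_1^0,g_2^0,g_3^0)=\tfrac12(1,-1-u,-1-\tfrac1u)$ for some $u\in C^\infty(S,\mathbb{R})$, $u>0$, and with $c_{23}^1=-2$. The normalization $\mathcal{N}:\mathrm{MC}_{\mathrm{pre}}\nrightarrow\mathrm{MC}_{\mathrm{normal}}$ is defined on tuples with $g_1^0>0$, $g_2^0<0$, $g_3^0<0$, $c_{23}^1\neq0$ everywhere, and maps such a tuple to the unique tuple in $\mathrm{MC}_{\mathrm{normal}}$ of the form $\big(S,Ag_1^0,Ag_2^0,Ag_3^0,\sigma AB^{g_2^0+g_3^0}D_1,\sigma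 AB^{g_3^0+g_1^0}D_2,\sigma AB^{g_1^0+g_2^0}D_3,\xi+\log A+(g_1^0+g_2^0+g_3^0)\log B\big)$ with $A,B\in C^\infty(S,\mathbb{R})$ positive and $\sigma\in\{\pm1\}$ (here $B^f=e^{f\log B}$). *)

(* Defs.v *)
(* classical reals. S is modelled as R^3 itself (S is
   diffeomorphic to R^3, and everything is invariant under diffeomorphism). *)
From Stdlib Require Import Reals ClassicalEpsilon.
Open Scope R_scope.

Inductive i3 : Type := I1 | I2 | I3.

Definition i3_eqb (a b : i3) : bool :=
  match a, b with
  | I1, I1 | I2, I2 | I3, I3 => true
  | _, _ => false
  end.

(* cyclic successor: (i, next i, next (next i)) runs over the cyclic triples *)
Definition next (i : i3) : i3 :=
  match i with I1 => I2 | I2 => I3 | I3 => I1 end.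

Definition sum3 (f : i3 -> R) : R := f I1 + f I2 + f I3.

Definition pt := i3 -> R.

Definition upd (x : pt) (i : i3) (t : R) : pt :=
  fun j => if i3_eqb j i then t else x j.

Definition has_partial (i : i3) (f : pt -> R) (x : pt) (l : R) : Prop :=
  derivable_pt_lim (fun t => f (upd x i t)) (x i) l.

Definition pd (i : i3) (f : pt -> R) (x : pt) : R :=
  epsilon (inhabits 0) (fun l => has_partial i f x l).

Definition cont3 (f : pt -> R) : Prop :=
  forall x eps, 0 < eps -> exists delta, 0 < delta /\
    forall y, (forall i, Rabs (y i - x i) < delta) -> Rabs (f y - f x) < eps.

Fixpoint Ck (n : nat) (f : pt -> R) : Prop :=
  match n with
  | O => cont3 f
  | S m => cont3 f /\ forall i, (forall x, exists l, has_partial i f x l) /\ Ck m (pd i f)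
  end.

Definition smooth (f : pt -> R) : Prop := forall n, Ck n f.

(* vector fields: V i x is the i-th coordinate component at x *)
Definition vf := i3 -> pt -> R.

Definition smooth_vf (V : vf) : Prop := forall i, smooth (V i).

Definition app (V : vf) (f : pt -> R) : pt -> R :=
  fun x => sum3 (fun i => V i x * pd i f x).

Definition scale (s : pt -> R) (V : vf) : vf := fun i x => s x * V i x.

Definition frame (D : i3 -> vf) : Prop :=
  forall (x : pt) (a : i3 -> R),
    (forall i, sum3 (fun j => a j * D j i x) = 0) -> forall j, a j = 0.

(* c j k i = c_{jk}^i : [D_j, D_k] = sum_i c_{jk}^i D_i *)
Definition is_struct (D : i3 -> vf) (c : i3 -> i3 -> i3 -> pt -> R) : Prop :=
  (forall j k i, smooth (c j k i)) /\
  forall j k (f : pt -> R), smooth f -> forall x,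
    app (D j) (app (D k) f) x - app (D k) (app (D j) f) x
    = sum3 (fun i => c j k i x * app (D i) f x).

(* tuples (S, g1, g2, g3, D1, D2, D3, xi) *)
Record MC : Type := mkMC { mg : i3 -> pt -> R; mD : i3 -> vf; mxi : pt -> R }.

Definition E1 (X : MC) (x : pt) : Prop :=
  0 = mg X I2 x * mg X I3 x + mg X I3 x * mg X I1 x + mg X I1 x * mg X I2 x.

Definition E2 (X : MC) (c : i3 -> i3 -> i3 -> pt -> R) (i : i3) (x : pt) : Prop :=
  let j := next i in let k := next j in
  0 = app (mD X i) (fun y => mg X j y + mg X k y) x
      + c i j j x * (mg X i x - mg X j x)
      + c i k k x * (mg X i x - mg X k x)
      - 2 * app (mD X i) (mxi X) x * mg X i x.

Definition MC_pre (X : MC) : Prop :=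
  (forall i, smooth (mg X i)) /\ smooth (mxi X) /\
  (forall i, smooth_vf (mD X i)) /\ frame (mD X) /\
  (forall x, E1 X x) /\
  exists c, is_struct (mD X) c /\ forall i x, E2 X c i x.

Definition MC_normal (X : MC) : Prop :=
  MC_pre X /\
  (exists u : pt -> R, smooth u /\ (forall x, 0 < u x) /\
     forall x, mg X I1 x = 1/2 /\ mg X I2 x = 1/2 * (-1 - u x)
               /\ mg X I3 x = 1/2 * (-1 - / u x)) /\
  (forall c, is_struct (mD X) c -> forall x, c I2 I3 I1 x = -2).

Definition rpow (b e : R) : R := exp (e * ln b).

(* N_rel Y Z : Y is in the domain of the normalization N and N(Y) = Z *)
Definition N_rel (Y Z : MC) : Prop :=
  (forall x, 0 < mg Y I1 x /\ mg Y I2 x < 0 /\ mg Y I3 x < 0) /\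
  (forall c, is_struct (mD Y) c -> forall x, c I2 I3 I1 x <> 0) /\
  exists (A B : pt -> R) (sigma : R),
    smooth A /\ smooth B /\ (forall x, 0 < A x /\ 0 < B x) /\
    (sigma = 1 \/ sigma = -1) /\
    (forall i x, mg Z i x = A x * mg Y i x) /\
    (forall i j x, mD Z i j x =
       sigma * A x * rpow (B x) (mg Y (next i) x + mg Y (next (next i)) x)
       * mD Y i j x) /\
    (forall x, mxi Z x = mxi Y x + ln (A x)
                        + (mg Y I1 x + mg Y I2 x + mg Y I3 x) * ln (B x)) /\
    MC_normal Z.

Definition g34 (X : MC) (c : i3 -> i3 -> i3 -> pt -> R) : pt -> R :=
  fun x => - c I3 I1 I1 x + app (mD X I3) (mxi X) x.
Definition g23 (X : MC) (c : i3 -> i3 -> i3 -> pt -> R) : pt -> R :=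
  fun x => - c I1 I2 I1 x - app (mD X I2) (mxi X) x.

Definition D1' (X : MC) (u : pt -> R) (c : i3 -> i3 -> i3 -> pt -> R) : vf :=
  fun i x => mD X I1 i x
             - (2 * g34 X c x / (u x - 2)) * mD X I2 i x
             + (2 * u x * g23 X c x / (2 * u x - 1)) * mD X I3 i x.

Definition gbar (ub : pt -> R) : i3 -> pt -> R :=
  fun i x => match i with
             | I1 => 1/2
             | I2 => - (1/2) * (1 + ub x)
             | I3 => - (1/2) * (1 + / ub x)
             end.

Definition T1 (X : MC) (u : pt -> R) (c : i3 -> i3 -> i3 -> pt -> R) : MC :=
  let s := fun x => / (1 - u x) in
  mkMC (gbar (fun x => / u x - 1))
       (fun i => match i with
                 | I1 => scale s (mD X I2)
                 | I2 => scale s (mD X I3)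
                 | I3 => scale s (D1' X u c)
                 end)
       (fun x => mxi X x + ln (/ (1 - u x))).

Definition T2 (X : MC) (u : pt -> R) (c : i3 -> i3 -> i3 -> pt -> R) : MC :=
  let s := fun x => u x / (u x - 1) in
  mkMC (gbar (fun x => u x - 1))
       (fun i => match i with
                 | I1 => scale s (mD X I3)
                 | I2 => scale s (mD X I2)
                 | I3 => scale s (D1' X u c)
                 end)
       (fun x => mxi X x + ln (u x / (u x - 1))).

(* Main.v *)
Require Import Defs.
From Stdlib Require Import Reals.
From Stdlib Require Import Lra ClassicalEpsilon FunctionalExtensionality.
Open Scope R_scope.

Lemma upd_same (x : pt) i : upd x i (x i) = x.
Proof. apply functional_extensionality; intro j; unfold upd; destruct j, i; reflexivity. Qed.

Lemma hp_add i f g x l1 l2 : has_partial i f x l1 -> has_partial i g x l2 ->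
  has_partial i (fun y => f y + g y) x (l1 + l2).
Proof. unfold has_partial; intros H1 H2. exact (derivable_pt_lim_plus _ _ _ _ _ H1 H2). Qed.

Lemma hp_mul i f g x l1 l2 : has_partial i f x l1 -> has_partial i g x l2 ->
  has_partial i (fun y => f y * g y) x (l1 * g x + f x * l2).
Proof. unfold has_partial; intros H1 H2.
  pose proof (derivable_pt_lim_mult _ _ _ _ _ H1 H2) as H. cbv beta in H.
  rewrite upd_same in H. exact H. Qed.

Lemma hp_comp i f h x l dh : has_partial i f x l -> derivable_pt_lim h (f x) dh ->
  has_partial i (fun y => h (f y)) x (dh * l).
Proof. unfold has_partial; intros H1 H2.
  rewrite <- (upd_same x i) in H2 at 1.
  exact (derivable_pt_lim_comp _ _ _ _ _ H1 H2). Qed.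

Lemma hp_const i a x : has_partial i (fun _ => a) x 0.
Proof. unfold has_partial. exact (derivable_pt_lim_const a (x i)). Qed.

Lemma hp_coord i k x : has_partial i (fun y => y k) x (if i3_eqb k i then 1 else 0).
Proof. unfold has_partial, upd. destruct i, k; simpl;
  first [exact (derivable_pt_lim_id _) | exact (derivable_pt_lim_const _ _)]. Qed.

Lemma pd_eq i f x l : has_partial i f x l -> pd i f x = l.
Proof. intro H. unfold pd.
  assert (H' : has_partial i f x (epsilon (inhabits 0) (fun l => has_partial i f x l))).
  { apply epsilon_spec. exists l; exact H. }
  exact (uniqueness_limite _ _ _ _ H' H). Qed.

Lemma dinv a : a <> 0 -> derivable_pt_lim (fun t => / t) a (- (/ a * / a)).
Proof. intro Ha.
  pose proof (derivable_pt_lim_div (fct_cte 1) id a 0 1 (derivable_pt_lim_const 1 a)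
     (derivable_pt_lim_id a) Ha) as H.
  apply (derivable_pt_lim_ext (fct_cte 1 / id)%F).
  { intro z. unfold div_fct, fct_cte, id. unfold Rdiv. ring. }
  replace (- (/ a * / a)) with ((0 * id a - 1 * fct_cte 1 a) / (id a)²); [exact H|].
  unfold fct_cte, id, Rsqr. field. exact Ha. Qed.

Lemma dsq a : derivable_pt_lim (fun t => t * t / 4) a ((1 * a + a * 1) / 4).
Proof. exact (derivable_pt_lim_div_scal (id * id)%F a _ 4 (derivable_pt_lim_mult id id a 1 1 (derivable_pt_lim_id a) (derivable_pt_lim_id a))). Qed.

Lemma dopp a : derivable_pt_lim (fun t => - t) a (- 1).
Proof. exact (derivable_pt_lim_opp id a 1 (derivable_pt_lim_id a)). Qed.

Lemma cont3_const a : cont3 (fun _ => a).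
Proof. intros x eps He. exists 1; split; [lra|]. intros y _. unfold Rminus. rewrite Rplus_opp_r, Rabs_R0. exact He. Qed.

Lemma cont3_coord k : cont3 (fun y => y k).
Proof. intros x eps He. exists eps; split; [exact He|]. intros y Hy. apply Hy. Qed.

Lemma cont3_add f g : cont3 f -> cont3 g -> cont3 (fun y => f y + g y).
Proof. intros Hf Hg x eps He.
  destruct (Hf x (eps/2)) as [d1 [Hd1 H1]]; [lra|].
  destruct (Hg x (eps/2)) as [d2 [Hd2 H2]]; [lra|].
  exists (Rmin d1 d2); split; [apply Rmin_glb_lt; assumption|].
  intros y Hy.
  assert (A1 : Rabs (f y - f x) < eps/2). { apply H1; intro i; specialize (Hy i). pose proof (Rmin_l d1 d2); lra. }
  assert (A2 : Rabs (g y - g x) < eps/2). { apply H2; intro i; specialize (Hy i). pose proof (Rmin_r d1 d2); lra. }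
  replace (f y + g y - (f x + g x)) with ((f y - f x) + (g y - g x)) by ring.
  pose proof (Rabs_triang (f y - f x) (g y - g x)). lra. Qed.

Lemma cont3_comp f h : cont3 f -> (forall x, exists dh, derivable_pt_lim h (f x) dh) ->
  cont3 (fun y => h (f y)).
Proof. intros Hf Hh x eps He.
  destruct (Hh x) as [dh Hd].
  assert (Hc : continuity_pt h (f x)) by (apply derivable_continuous_pt; exact (exist _ dh Hd)).
  unfold continuity_pt, continue_in, limit1_in, limit_in in Hc.
  destruct (Hc eps He) as [alp [Ha Hal]].
  destruct (Hf x alp Ha) as [d [Hd0 Hdd]].
  exists d; split; [exact Hd0|]. intros y Hy.
  destruct (Req_dec (f y) (f x)) as [E|E].
  - rewrite E. unfold Rminus; rewrite Rplus_opp_r, Rabs_R0; exact He.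
  - apply (Hal (f y)). split.
    + split; [exact I|]. intro E'; apply E; symmetry; exact E'.
    + simpl. unfold R_dist. apply Hdd. exact Hy. Qed.

Lemma cont3_opp f : cont3 f -> cont3 (fun y => - f y).
Proof. intro H. apply (cont3_comp f (fun t => - t) H). intro; eexists; apply dopp. Qed.

Lemma cont3_mul f g : cont3 f -> cont3 g -> cont3 (fun y => f y * g y).
Proof. intros Hf Hg.
  replace (fun y => f y * g y) with
    (fun y => (fun t => t * t / 4) (f y + g y) + - (fun t => t * t / 4) (f y + - g y)).
  2:{ apply functional_extensionality; intro y. field. }
  apply cont3_add.
  - apply (cont3_comp (fun y => f y + g y) (fun t => t * t / 4)); [apply cont3_add; assumption|].
    intro; eexists; apply dsq.
  - apply cont3_opp. apply (cont3_comp (fun y => f y + - g y) (fun t => t * t / 4)).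
    + apply cont3_add; [assumption| apply cont3_opp; assumption].
    + intro; eexists; apply dsq. Qed.

Lemma Ck_cont n f : Ck n f -> cont3 f.
Proof. destruct n; simpl; tauto. Qed.

Lemma Ck_mono n : forall f, Ck (S n) f -> Ck n f.
Proof. induction n; intros f H.
  - simpl in *. tauto.
  - destruct H as [Hc H]. split; [exact Hc|]. intro i. destruct (H i) as [H1 H2].
    split; [exact H1|]. apply IHn; exact H2. Qed.

Lemma Ck_partial n f : Ck (S n) f -> forall i x, has_partial i f x (pd i f x).
Proof. intros [_ H] i x. destruct (H i) as [H1 _]. destruct (H1 x) as [l Hl].
  rewrite (pd_eq _ _ _ _ Hl). exact Hl. Qed.

Lemma Ck_const n : forall a, Ck n (fun _ => a).
Proof. induction n; intro a.
  - apply cont3_const.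
  - split; [apply cont3_const|]. intro i. split.
    + intro x; exists 0; apply hp_const.
    + replace (pd i (fun _ => a)) with (fun _ : pt => 0); [apply IHn|].
      apply functional_extensionality; intro x. symmetry; apply pd_eq, hp_const. Qed.

Lemma Ck_coord n k : Ck n (fun y => y k).
Proof. destruct n.
  - apply cont3_coord.
  - split; [apply cont3_coord|]. intro i. split.
    + intro x; eexists; apply hp_coord.
    + replace (pd i (fun y => y k)) with (fun _ : pt => if i3_eqb k i then 1 else 0); [apply Ck_const|].
      apply functional_extensionality; intro x. symmetry; apply pd_eq, hp_coord. Qed.

Lemma Ck_add n : forall f g, Ck n f -> Ck n g -> Ck n (fun y => f y + g y).
Proof. induction n; intros f g Hf Hg.
  - apply cont3_add; assumption.
  - pose proof (Ck_partial _ _ Hf) as Pf. pose proof (Ck_partial _ _ Hg) as Pg.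
    destruct Hf as [Cf Hf]; destruct Hg as [Cg Hg].
    split; [apply cont3_add; assumption|]. intro i. split.
    + intro x; eexists; apply hp_add; [apply Pf|apply Pg].
    + replace (pd i (fun y => f y + g y)) with (fun y => pd i f y + pd i g y).
      * apply IHn; [apply (Hf i)|apply (Hg i)].
      * apply functional_extensionality; intro x. symmetry; apply pd_eq, hp_add; [apply Pf|apply Pg]. Qed.

Lemma Ck_mul n : forall f g, Ck n f -> Ck n g -> Ck n (fun y => f y * g y).
Proof. induction n; intros f g Hf Hg.
  - apply cont3_mul; assumption.
  - pose proof (Ck_partial _ _ Hf) as Pf. pose proof (Ck_partial _ _ Hg) as Pg.
    pose proof (Ck_mono _ _ Hf) as Mf. pose proof (Ck_mono _ _ Hg) as Mg.
    destruct Hf as [Cf Hf]; destruct Hg as [Cg Hg].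
    split; [apply cont3_mul; assumption|]. intro i. split.
    + intro x; eexists; apply hp_mul; [apply Pf|apply Pg].
    + replace (pd i (fun y => f y * g y)) with (fun y => pd i f y * g y + f y * pd i g y).
      * apply Ck_add; apply IHn; try assumption; [apply (Hf i)|apply (Hg i)].
      * apply functional_extensionality; intro x. symmetry; apply pd_eq, hp_mul; [apply Pf|apply Pg]. Qed.

Lemma Ck_opp n f : Ck n f -> Ck n (fun y => - f y).
Proof. intro H. replace (fun y => - f y) with (fun y => (fun _ => -1) y * f y).
  - apply Ck_mul; [apply Ck_const|exact H].
  - apply functional_extensionality; intro; ring. Qed.

Lemma Ck_inv n : forall f, Ck n f -> (forall y, f y <> 0) -> Ck n (fun y => / f y).
Proof. induction n; intros f Hf Hnz.
  - apply (cont3_comp f (fun t => / t)); [exact Hf|]. intro x; eexists; apply dinv, Hnz.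
  - pose proof (Ck_partial _ _ Hf) as Pf. pose proof (Ck_mono _ _ Hf) as Mf.
    assert (Hp : forall i x, has_partial i (fun y => / f y) x (- (/ f x * / f x) * pd i f x)).
    { intros i x. apply (hp_comp i f (fun t => / t)); [apply Pf| apply dinv, Hnz]. }
    destruct Hf as [Cf Hf].
    split.
    + apply (cont3_comp f (fun t => / t)); [exact Cf|]. intro x; eexists; apply dinv, Hnz.
    + intro i. split.
      * intro x; eexists; apply Hp.
      * replace (pd i (fun y => / f y)) with (fun y => - (/ f y * / f y) * pd i f y).
        -- apply Ck_mul; [apply Ck_opp, Ck_mul; apply IHn; assumption | apply (Hf i)].
        -- apply functional_extensionality; intro x. symmetry; apply pd_eq, Hp. Qed.

Lemma Ck_ln n f : Ck n f -> (forall y, 0 < f y) -> Ck n (fun y => ln (f y)).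
Proof. intros Hf Hpos. destruct n.
  - apply (cont3_comp f ln); [exact Hf|]. intro x; eexists; apply derivable_pt_lim_ln, Hpos.
  - pose proof (Ck_partial _ _ Hf) as Pf. pose proof (Ck_mono _ _ Hf) as Mf.
    assert (Hp : forall i x, has_partial i (fun y => ln (f y)) x (/ f x * pd i f x)).
    { intros i x. apply (hp_comp i f ln); [apply Pf| apply derivable_pt_lim_ln, Hpos]. }
    destruct Hf as [Cf Hf].
    split.
    + apply (cont3_comp f ln); [exact Cf|]. intro x; eexists; apply derivable_pt_lim_ln, Hpos.
    + intro i. split.
      * intro x; eexists; apply Hp.
      * replace (pd i (fun y => ln (f y))) with (fun y => / f y * pd i f y).
        -- apply Ck_mul; [apply Ck_inv; [exact Mf| intro y; specialize (Hpos y); lra] | apply (Hf i)].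
        -- apply functional_extensionality; intro x. symmetry; apply pd_eq, Hp. Qed.

Lemma smooth_const a : smooth (fun _ => a).
Proof. intro n; apply Ck_const. Qed.
Lemma smooth_coord k : smooth (fun y => y k).
Proof. intro n; apply Ck_coord. Qed.
Lemma smooth_add f g : smooth f -> smooth g -> smooth (fun y => f y + g y).
Proof. intros Hf Hg n; apply Ck_add; auto. Qed.
Lemma smooth_mul f g : smooth f -> smooth g -> smooth (fun y => f y * g y).
Proof. intros Hf Hg n; apply Ck_mul; auto. Qed.
Lemma smooth_opp f : smooth f -> smooth (fun y => - f y).
Proof. intros Hf n; apply Ck_opp; auto. Qed.
Lemma smooth_sub f g : smooth f -> smooth g -> smooth (fun y => f y - g y).
Proof. intros Hf Hg. exact (smooth_add _ _ Hf (smooth_opp _ Hg)). Qed.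
Lemma smooth_inv f : smooth f -> (forall y, f y <> 0) -> smooth (fun y => / f y).
Proof. intros Hf Hnz n; apply Ck_inv; auto. Qed.
Lemma smooth_div f g : smooth f -> smooth g -> (forall y, g y <> 0) -> smooth (fun y => f y / g y).
Proof. intros Hf Hg Hnz. exact (smooth_mul _ _ Hf (smooth_inv _ Hg Hnz)). Qed.
Lemma smooth_ln f : smooth f -> (forall y, 0 < f y) -> smooth (fun y => ln (f y)).
Proof. intros Hf Hp n; apply Ck_ln; auto. Qed.
Lemma smooth_pd i f : smooth f -> smooth (pd i f).
Proof. intros H n. destruct (H (S n)) as [_ H']. apply (H' i). Qed.
Lemma smooth_partial f : smooth f -> forall i x, has_partial i f x (pd i f x).
Proof. intros H. apply (Ck_partial 0), H. Qed.

Lemma smooth_app V f : smooth_vf V -> smooth f -> smooth (app V f).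
Proof. intros HV Hf. unfold app, sum3.
  repeat apply smooth_add; apply smooth_mul; try apply HV; apply smooth_pd; exact Hf. Qed.

Lemma pd_add i f g x : smooth f -> smooth g -> pd i (fun y => f y + g y) x = pd i f x + pd i g x.
Proof. intros Hf Hg; apply pd_eq, hp_add; apply smooth_partial; assumption. Qed.
Lemma pd_mul i f g x : smooth f -> smooth g -> pd i (fun y => f y * g y) x = pd i f x * g x + f x * pd i g x.
Proof. intros Hf Hg; apply pd_eq, hp_mul; apply smooth_partial; assumption. Qed.
Lemma pd_const i a x : pd i (fun _ => a) x = 0.
Proof. apply pd_eq, hp_const. Qed.
Lemma pd_opp i f x : smooth f -> pd i (fun y => - f y) x = - pd i f x.
Proof. intros Hf. rewrite (pd_eq i _ x (-1 * pd i f x)); [ring|].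
  apply (hp_comp i f (fun t => - t)); [apply smooth_partial, Hf| apply dopp]. Qed.
Lemma pd_inv i f x : smooth f -> f x <> 0 -> pd i (fun y => / f y) x = - (pd i f x / (f x * f x)).
Proof. intros Hf Hnz. rewrite (pd_eq i _ x (- (/ f x * / f x) * pd i f x)).
  - field; exact Hnz.
  - apply (hp_comp i f (fun t => / t)); [apply smooth_partial, Hf| apply dinv, Hnz]. Qed.
Lemma pd_ln i f x : smooth f -> 0 < f x -> pd i (fun y => ln (f y)) x = pd i f x / f x.
Proof. intros Hf Hp. rewrite (pd_eq i _ x (/ f x * pd i f x)).
  - unfold Rdiv; ring.
  - apply (hp_comp i f ln); [apply smooth_partial, Hf| apply derivable_pt_lim_ln, Hp]. Qed.
Lemma pd_coord i k x : pd i (fun y => y k) x = if i3_eqb k i then 1 else 0.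
Proof. apply pd_eq, hp_coord. Qed.

Lemma app_ext V F x (L : i3 -> R) : (forall i, pd i F x = L i) -> app V F x = sum3 (fun i => V i x * L i).
Proof. intro H. unfold app, sum3. rewrite !H. reflexivity. Qed.

Lemma app_add V f g x : smooth f -> smooth g -> app V (fun y => f y + g y) x = app V f x + app V g x.
Proof. intros Hf Hg. rewrite (app_ext V _ x (fun i => pd i f x + pd i g x)).
  - unfold app, sum3; ring.
  - intro; apply pd_add; assumption. Qed.
Lemma app_sub V f g x : smooth f -> smooth g -> app V (fun y => f y - g y) x = app V f x - app V g x.
Proof. intros Hf Hg. unfold Rminus. rewrite app_add; [|exact Hf|apply smooth_opp, Hg].
  rewrite (app_ext V (fun y => - g y) x (fun i => - pd i g x)).
  - unfold app, sum3; ring.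
  - intro; apply pd_opp; assumption. Qed.
Lemma app_opp V f x : smooth f -> app V (fun y => - f y) x = - app V f x.
Proof. intros Hf. rewrite (app_ext V _ x (fun i => - pd i f x)).
  - unfold app, sum3; ring.
  - intro; apply pd_opp; assumption. Qed.
Lemma app_mul V f g x : smooth f -> smooth g -> app V (fun y => f y * g y) x = app V f x * g x + f x * app V g x.
Proof. intros Hf Hg. rewrite (app_ext V _ x (fun i => pd i f x * g x + f x * pd i g x)).
  - unfold app, sum3; ring.
  - intro; apply pd_mul; assumption. Qed.
Lemma app_const V a x : app V (fun _ => a) x = 0.
Proof. rewrite (app_ext V _ x (fun i => 0)).
  - unfold sum3; ring.
  - intro; apply pd_const. Qed.
Lemma app_inv V f x : smooth f -> f x <> 0 -> app V (fun y => / f y) x = - (app V f x / (f x * f x)).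
Proof. intros Hf Hnz. rewrite (app_ext V _ x (fun i => - (pd i f x / (f x * f x)))).
  - unfold app, sum3; field; exact Hnz.
  - intro; apply pd_inv; assumption. Qed.
Lemma app_ln V f x : smooth f -> 0 < f x -> app V (fun y => ln (f y)) x = app V f x / f x.
Proof. intros Hf Hp. rewrite (app_ext V _ x (fun i => pd i f x / f x)).
  - unfold app, sum3; field; lra.
  - intro; apply pd_ln; assumption. Qed.
Lemma app_coord V k x : app V (fun y => y k) x = V k x.
Proof. rewrite (app_ext V _ x (fun i => if i3_eqb k i then 1 else 0)).
  - unfold sum3; destruct k; simpl; ring.
  - intro; apply pd_coord. Qed.
Lemma app_sum3 V (F : i3 -> pt -> R) x : (forall p, smooth (F p)) ->
  app V (fun y => sum3 (fun p => F p y)) x = sum3 (fun p => app V (F p) x).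
Proof. intro H. unfold sum3 at 1. rewrite app_add, app_add; try apply smooth_add; auto. Qed.

Lemma sum3_ext (F G : i3 -> R) : (forall i, F i = G i) -> sum3 F = sum3 G.
Proof. intro H; unfold sum3; rewrite !H; reflexivity. Qed.

Lemma coef_zero D x (a : i3 -> R) : frame D ->
  (forall f, smooth f -> sum3 (fun m => a m * app (D m) f x) = 0) -> forall m, a m = 0.
Proof. intros Hfr H. apply (Hfr x a). intro i.
  rewrite <- (H (fun y => y i) (smooth_coord i)).
  apply sum3_ext; intro m; rewrite app_coord; reflexivity. Qed.

Lemma c_antisym D c : is_struct D c -> frame D -> forall j k l x, c k j l x = - c j k l x.
Proof. intros [_ Hb] Hfr j k l x.
  assert (H : forall m, c k j m x + c j k m x = 0).
  { apply (coef_zero D x (fun m => c k j m x + c j k m x) Hfr). intros f Hf.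
    transitivity (sum3 (fun i => c k j i x * app (D i) f x) + sum3 (fun i => c j k i x * app (D i) f x)).
    - unfold sum3; ring.
    - rewrite <- !Hb by exact Hf. ring. }
  specialize (H l). lra. Qed.

Section Jac.
Variables (D : i3 -> vf) (c : i3 -> i3 -> i3 -> pt -> R).
Hypothesis Hs : is_struct D c.
Hypothesis HD : forall i, smooth_vf (D i).

Lemma jac_term f x i j k : smooth f ->
  (app (D i) (app (D j) (app (D k) f)) x - app (D i) (app (D k) (app (D j) f)) x)
  - (app (D j) (app (D k) (app (D i) f)) x - app (D k) (app (D j) (app (D i) f)) x)
  = sum3 (fun m => (app (D i) (c j k m) x + sum3 (fun l => c j k l x * c i l m x)) * app (D m) f x).
Proof. intro Hf. destruct Hs as [Hc Hb].
  assert (Sa : forall a g, smooth g -> smooth (app (D a) g)) by (intros; apply smooth_app; auto).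
  rewrite <- app_sub by (apply Sa, Sa, Hf).
  replace (fun y => app (D j) (app (D k) f) y - app (D k) (app (D j) f) y)
    with (fun y => sum3 (fun l => c j k l y * app (D l) f y))
    by (apply functional_extensionality; intro y; symmetry; apply Hb, Hf).
  rewrite app_sum3 by (intro p; apply smooth_mul; [apply Hc| apply Sa, Hf]).
  rewrite (Hb j k (app (D i) f) (Sa _ _ Hf) x).
  assert (Z : forall l, app (D i) (app (D l) f) x - app (D l) (app (D i) f) x
                        - sum3 (fun m => c i l m x * app (D m) f x) = 0)
    by (intro l; rewrite (Hb i l f Hf x); ring).
  unfold sum3 in *. rewrite !app_mul by (try apply Hc; apply Sa, Hf).
  pose proof (Z I1); pose proof (Z I2); pose proof (Z I3).
  transitivity (
    (app (D i) (c j k I1) x * app (D I1) f x + app (D i) (c j k I2) x * app (D I2) f x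
      + app (D i) (c j k I3) x * app (D I3) f x)
    + c j k I1 x * (c i I1 I1 x * app (D I1) f x + c i I1 I2 x * app (D I2) f x + c i I1 I3 x * app (D I3) f x)
    + c j k I2 x * (c i I2 I1 x * app (D I1) f x + c i I2 I2 x * app (D I2) f x + c i I2 I3 x * app (D I3) f x)
    + c j k I3 x * (c i I3 I1 x * app (D I1) f x + c i I3 I2 x * app (D I2) f x + c i I3 I3 x * app (D I3) f x)
    + c j k I1 x * (app (D i) (app (D I1) f) x - app (D I1) (app (D i) f) x
          - (c i I1 I1 x * app (D I1) f x + c i I1 I2 x * app (D I2) f x + c i I1 I3 x * app (D I3) f x))
    + c j k I2 x * (app (D i) (app (D I2) f) x - app (D I2) (app (D i) f) x
          - (c i I2 I1 x * app (D I1) f x + c i I2 I2 x * app (D I2) f x + c i I2 I3 x * app (D I3) f x))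
    + c j k I3 x * (app (D i) (app (D I3) f) x - app (D I3) (app (D i) f) x
          - (c i I3 I1 x * app (D I1) f x + c i I3 I2 x * app (D I2) f x + c i I3 I3 x * app (D I3) f x))).
  - ring.
  - rewrite (Z I1), (Z I2), (Z I3). ring. Qed.

Lemma jacobi : frame D -> forall m x,
  app (D I1) (c I2 I3 m) x + app (D I2) (c I3 I1 m) x + app (D I3) (c I1 I2 m) x
  + sum3 (fun l => c I2 I3 l x * c I1 l m x) + sum3 (fun l => c I3 I1 l x * c I2 l m x)
  + sum3 (fun l => c I1 I2 l x * c I3 l m x) = 0.
Proof. intros Hfr m x.
  set (a := fun m => app (D I1) (c I2 I3 m) x + app (D I2) (c I3 I1 m) x + app (D I3) (c I1 I2 m) x
  + sum3 (fun l => c I2 I3 l x * c I1 l m x) + sum3 (fun l => c I3 I1 l x * c I2 l m x)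
  + sum3 (fun l => c I1 I2 l x * c I3 l m x)).
  change (a m = 0). apply (coef_zero D x a Hfr). intros f Hf.
  pose proof (jac_term f x I1 I2 I3 Hf) as J1.
  pose proof (jac_term f x I2 I3 I1 Hf) as J2.
  pose proof (jac_term f x I3 I1 I2 Hf) as J3.
  transitivity (sum3 (fun m => (app (D I1) (c I2 I3 m) x + sum3 (fun l => c I2 I3 l x * c I1 l m x)) * app (D m) f x)
    + sum3 (fun m => (app (D I2) (c I3 I1 m) x + sum3 (fun l => c I3 I1 l x * c I2 l m x)) * app (D m) f x)
    + sum3 (fun m => (app (D I3) (c I1 I2 m) x + sum3 (fun l => c I1 I2 l x * c I3 l m x)) * app (D m) f x)).
  - unfold a, sum3; ring.
  - rewrite <- J1, <- J2, <- J3. ring. Qed.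
End Jac.

Definition cfc (E : i3 -> vf) (M N : i3 -> i3 -> pt -> R) (c : i3 -> i3 -> i3 -> pt -> R)
  : i3 -> i3 -> i3 -> pt -> R :=
  fun j k l x => sum3 (fun q => (sum3 (fun n => sum3 (fun p => M j n x * M k p x * c n p q x))
      + app (E j) (M k q) x - app (E k) (M j q) x) * N q l x).

Definition cfcD (D : i3 -> vf) (M N : i3 -> i3 -> pt -> R) (c : i3 -> i3 -> i3 -> pt -> R)
  : i3 -> i3 -> i3 -> pt -> R :=
  fun j k l x => sum3 (fun q => (sum3 (fun n => sum3 (fun p => M j n x * M k p x * c n p q x))
      + sum3 (fun n => M j n x * app (D n) (M k q) x) - sum3 (fun n => M k n x * app (D n) (M j q) x)) * N q l x).

Lemma cfc_eq D E M N c : (forall m f x, app (E m) f x = sum3 (fun n => M m n x * app (D n) f x)) ->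
  forall j k l x, cfc E M N c j k l x = cfcD D M N c j k l x.
Proof. intros H j k l x. unfold cfc, cfcD. apply sum3_ext; intro q. cbv beta. rewrite !H. reflexivity. Qed.

Lemma collapse (N M : i3 -> i3 -> pt -> R) (K d : i3 -> R) x :
  (forall q p x, sum3 (fun l => N q l x * M l p x) = if i3_eqb q p then 1 else 0) ->
  sum3 (fun l => sum3 (fun q => K q * N q l x) * sum3 (fun m => M l m x * d m)) = sum3 (fun q => K q * d q).
Proof. intro H.
  transitivity (sum3 (fun q => K q * sum3 (fun m => sum3 (fun l => N q l x * M l m x) * d m))).
  - unfold sum3; ring.
  - apply sum3_ext; intro q. f_equal. unfold sum3 at 1. rewrite !H. destruct q; simpl; ring. Qed.

Lemma sum_zero (F W : i3 -> i3 -> R) : (forall n p, W n p = 0) ->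
  sum3 (fun n => sum3 (fun p => F n p * W n p)) = 0.
Proof. intro H; unfold sum3; rewrite !H; ring. Qed.

Lemma frame_change D c E M N :
  is_struct D c -> (forall i, smooth_vf (D i)) -> (forall i, smooth_vf (E i)) ->
  (forall m n, smooth (M m n)) -> (forall q l, smooth (N q l)) ->
  (forall m f x, app (E m) f x = sum3 (fun n => M m n x * app (D n) f x)) ->
  (forall q p x, sum3 (fun l => N q l x * M l p x) = if i3_eqb q p then 1 else 0) ->
  is_struct E (cfc E M N c).
Proof. intros [Hc Hb] HD HE HM HN Happ Hinv. split.
  - intros j k l. unfold cfc, sum3.
    repeat first [apply smooth_app | apply smooth_add | apply smooth_sub | apply smooth_opp | apply smooth_mul | apply HM | apply HN | apply Hc | apply HE].
  - intros j k f Hf x.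
    assert (Sa : forall a g, smooth g -> smooth (app (D a) g)) by (intros; apply smooth_app; auto).
    assert (L0 : forall k n, app (D n) (app (E k) f) x =
       sum3 (fun p => app (D n) (M k p) x * app (D p) f x + M k p x * app (D n) (app (D p) f) x)).
    { intros k' n. replace (app (E k') f) with (fun y => sum3 (fun p => M k' p y * app (D p) f y))
        by (apply functional_extensionality; intro y; symmetry; apply Happ).
      rewrite app_sum3 by (intro p; apply smooth_mul; [apply HM| apply Sa, Hf]).
      apply sum3_ext; intro p. rewrite app_mul by (try apply HM; apply Sa, Hf). reflexivity. }
    assert (L1 : forall j k, app (E j) (app (E k) f) x = sum3 (fun n => M j n x *
       sum3 (fun p => app (D n) (M k p) x * app (D p) f x + M k p x * app (D n) (app (D p) f) x))).
    { intros j' k'. rewrite Happ. apply sum3_ext; intro n. rewrite L0. reflexivity. }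
    rewrite L1, L1.
    transitivity (sum3 (fun l => cfcD D M N c j k l x * sum3 (fun m => M l m x * app (D m) f x))).
    2:{ apply sum3_ext; intro l; rewrite Happ, (cfc_eq D E M N c Happ); reflexivity. }
    unfold cfcD. rewrite (collapse N M _ (fun m => app (D m) f x) x Hinv).
    pose proof (sum_zero (fun n p => M j n x * M k p x)
      (fun n p => app (D n) (app (D p) f) x - app (D p) (app (D n) f) x - sum3 (fun q => c n p q x * app (D q) f x)))
      as H0.
    cbv beta in H0. specialize (H0 (fun n p => ltac:(rewrite (Hb n p f Hf x); ring))).
    unfold sum3 in *. lra. Qed.

Lemma struct_unique D c c0 : frame D -> is_struct D c -> is_struct D c0 ->
  forall j k l x, c0 j k l x = c j k l x.
Proof. intros Hfr [_ H1] [_ H2] j k l x.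
  assert (H : forall m, c0 j k m x - c j k m x = 0).
  { apply (coef_zero D x (fun m => c0 j k m x - c j k m x) Hfr). intros f Hf.
    transitivity (sum3 (fun i => c0 j k i x * app (D i) f x) - sum3 (fun i => c j k i x * app (D i) f x)).
    - unfold sum3; ring.
    - rewrite <- H1, <- H2 by exact Hf. ring. }
  specialize (H l). lra. Qed.

Lemma solve_lin (X A B : R) : B <> 0 -> 0 = A - X * B -> X = A / B.
Proof. intros HB H. apply (Rmult_eq_reg_r B); [|exact HB].
  unfold Rdiv; rewrite Rmult_assoc, Rinv_l, Rmult_1_r by exact HB. lra. Qed.

Definition M1 X u c : i3 -> i3 -> pt -> R := fun m n => match m, n with
 | I1, I2 => fun x => / (1 - u x)
 | I2, I3 => fun x => / (1 - u x)
 | I3, I1 => fun x => / (1 - u x)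
 | I3, I2 => fun x => / (1 - u x) * - (2 * g34 X c x / (u x - 2))
 | I3, I3 => fun x => / (1 - u x) * (2 * u x * g23 X c x / (2 * u x - 1))
 | _, _ => fun _ => 0 end.
Definition N1 X u c : i3 -> i3 -> pt -> R := fun q l => match q, l with
 | I1, I1 => fun x => 2 * g34 X c x / (u x - 2) * (1 - u x)
 | I1, I2 => fun x => - (2 * u x * g23 X c x / (2 * u x - 1)) * (1 - u x)
 | I1, I3 => fun x => 1 - u x
 | I2, I1 => fun x => 1 - u x
 | I3, I2 => fun x => 1 - u x
 | _, _ => fun _ => 0 end.

Lemma Happ1 X u c : forall m f x, app (mD (T1 X u c) m) f x = sum3 (fun n => M1 X u c m n x * app (mD X n) f x).
Proof. intros m f x. destruct m; unfold app, sum3, T1, scale, D1'; simpl; ring. Qed.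

Lemma Hinv1 X u c : (forall y, 1 - u y <> 0) -> (forall y, u y - 2 <> 0) -> (forall y, 2 * u y - 1 <> 0) ->
  forall q p x, sum3 (fun l => N1 X u c q l x * M1 X u c l p x) = if i3_eqb q p then 1 else 0.
Proof. intros H1 H2 H3 q p x. specialize (H1 x); specialize (H2 x); specialize (H3 x).
  destruct q, p; unfold sum3; simpl; field; auto. Qed.

Module C1.

Section C1.
Variables (X : MC) (u : pt -> R) (c : i3 -> i3 -> i3 -> pt -> R).
Hypothesis Hs : is_struct (mD X) c.
Hypothesis HD : forall i, smooth_vf (mD X i).
Hypothesis Hfr : frame (mD X).
Hypothesis Hxi : smooth (mxi X).
Hypothesis Hu : smooth u.
Hypothesis Hpos : forall y, 0 < u y < 1 /\ u y <> 1/2.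
Hypothesis Hg1 : mg X I1 = fun _ => 1/2.
Hypothesis Hg2 : mg X I2 = fun y => 1/2 * (-1 - u y).
Hypothesis Hg3 : mg X I3 = fun y => 1/2 * (-1 - / u y).
Hypothesis HE2 : forall i x, E2 X c i x.
Hypothesis Hc231 : forall x, c I2 I3 I1 x = -2.

Lemma Hcs : forall j k l, smooth (c j k l).
Proof. apply Hs. Qed.
Lemma nz_u y : u y <> 0. Proof. specialize (Hpos y); lra. Qed.
Lemma nz_1u y : 1 - u y <> 0. Proof. specialize (Hpos y); lra. Qed.
Lemma nz_u2 y : u y - 2 <> 0. Proof. specialize (Hpos y); lra. Qed.
Lemma nz_2u1 y : 2 * u y - 1 <> 0. Proof. specialize (Hpos y); lra. Qed.
Lemma nz_iu1 y : / u y - 1 <> 0.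
Proof. specialize (Hpos y). intro H. assert (u y * (/ u y - 1) = 0) by (rewrite H; ring).
  rewrite Rmult_minus_distr_l, Rinv_r in H0 by lra. lra. Qed.
Lemma pos_i1u y : 0 < / (1 - u y).
Proof. specialize (Hpos y). apply Rinv_0_lt_compat; lra. Qed.
Lemma nz_u1 y : u y + 1 <> 0. Proof. specialize (Hpos y); lra. Qed.

Ltac nzx := cbv beta; first [apply nz_u | apply nz_1u | apply nz_u2 | apply nz_2u1 | apply nz_iu1 | apply pos_i1u].
Ltac sm := repeat first [ assumption | apply smooth_const | apply smooth_app | apply Hcs | apply HD | exact (HD _ _)
   | apply smooth_add | apply smooth_sub | apply smooth_opp | apply smooth_mul | apply smooth_inv | apply smooth_ln
   | (intro; nzx) ].
Ltac side := first [ solve [sm] | solve [nzx] ].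
Ltac push_in H := repeat first [ rewrite app_const in H | rewrite app_add in H by side | rewrite app_sub in H by side
   | rewrite app_opp in H by side | rewrite app_mul in H by side | rewrite app_inv in H by side | rewrite app_ln in H by side ].
Ltac push := repeat first [ rewrite app_const | rewrite app_add by side | rewrite app_sub by side
   | rewrite app_opp by side | rewrite app_mul by side | rewrite app_inv by side | rewrite app_ln by side ].


Lemma A21 l y : c I2 I1 l y = - c I1 I2 l y. Proof. apply (c_antisym _ _ Hs Hfr). Qed.
Lemma A32 l y : c I3 I2 l y = - c I2 I3 l y. Proof. apply (c_antisym _ _ Hs Hfr). Qed.
Lemma A13 l y : c I1 I3 l y = - c I3 I1 l y. Proof. apply (c_antisym _ _ Hs Hfr). Qed.
Lemma Add j l y : c j j l y = 0.
Proof. pose proof (c_antisym _ _ Hs Hfr j j l y). lra. Qed.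
Lemma Cf : c I2 I3 I1 = fun _ => -2.
Proof. apply functional_extensionality; apply Hc231. Qed.

Ltac canon := repeat first [rewrite A21 | rewrite A32 | rewrite A13 | rewrite Add | rewrite Hc231].
Ltac canon_in H := repeat first [rewrite A21 in H | rewrite A32 in H | rewrite A13 in H | rewrite Add in H | rewrite Hc231 in H].

Lemma HXg i x : app (mD X i) (mxi X) x =
  (app (mD X i) (fun y => mg X (next i) y + mg X (next (next i)) y) x
   + c i (next i) (next i) x * (mg X i x - mg X (next i) x)
   + c i (next (next i)) (next (next i)) x * (mg X i x - mg X (next (next i)) x)) / (2 * mg X i x).
Proof. pose proof (HE2 i x) as E. unfold E2 in E. apply solve_lin.
  - specialize (Hpos x). destruct i; simpl; rewrite ?Hg1, ?Hg2, ?Hg3; cbv beta.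
    + lra.
    + lra.
    + pose proof (Rinv_0_lt_compat (u x) ltac:(lra)). lra.
  - simpl in E |- *. lra. Qed.


Lemma HJ x : app (mD X I3) (c I1 I2 I1) x =
  - (app (mD X I1) (c I2 I3 I1) x + app (mD X I2) (c I3 I1 I1) x
  + sum3 (fun l => c I2 I3 l x * c I1 l I1 x) + sum3 (fun l => c I3 I1 l x * c I2 l I1 x)
  + sum3 (fun l => c I1 I2 l x * c I3 l I1 x)).
Proof. pose proof (jacobi _ _ Hs HD Hfr I1 x). lra. Qed.

Lemma HC x : app (mD X I3) (app (mD X I2) (mxi X)) x =
  app (mD X I2) (app (mD X I3) (mxi X)) x - sum3 (fun i => c I2 I3 i x * app (mD X i) (mxi X) x).
Proof. destruct Hs as [_ Hb]. rewrite <- (Hb I2 I3 (mxi X) Hxi x). ring. Qed.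

Ltac prepX x :=
  pose proof (HXg I1 x) as HX1; pose proof (HXg I2 x) as HX2; pose proof (HXg I3 x) as HX3;
  simpl in HX1, HX2, HX3; rewrite ?Hg1, ?Hg2, ?Hg3 in HX1, HX2, HX3; cbv beta in HX1, HX2, HX3;
  push_in HX1; push_in HX2; push_in HX3; canon_in HX1; canon_in HX2; canon_in HX3;
  pose proof (HJ x) as HJx; rewrite Cf in HJx; push_in HJx; unfold sum3 in HJx; canon_in HJx;
  pose proof (HC x) as HCx; unfold sum3 in HCx; canon_in HCx.

Lemma E2_T1 i x : E2 (T1 X u c) (cfc (mD (T1 X u c)) (M1 X u c) (N1 X u c) c) i x.
Proof.
  prepX x.
  unfold E2. rewrite !(cfc_eq _ _ _ _ c (Happ1 X u c)). unfold cfcD. rewrite !Happ1.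
  destruct i; simpl; unfold sum3; simpl.
  all: rewrite ?Cf; unfold g34, g23, Rdiv; cbv beta; push.
  all: canon; rewrite ?HJx; rewrite ?HCx; rewrite ?HX1, ?HX2, ?HX3.
  all: pose proof (nz_u x); pose proof (nz_1u x); pose proof (nz_u2 x); pose proof (nz_2u1 x);
       pose proof (nz_iu1 x); pose proof (nz_u1 x).
  all: field; repeat split; auto; specialize (Hpos x); lra.
Qed.

Lemma pre_T1 : MC_pre (T1 X u c).
Proof.
  assert (HE : forall i, smooth_vf (mD (T1 X u c) i)).
  { intros i j. destruct i; simpl; unfold scale, D1', g34, g23; sm. }
  assert (HM : forall m n, smooth (M1 X u c m n)).
  { intros m n; destruct m, n; simpl; unfold g34, g23; sm. }
  assert (HN : forall m n, smooth (N1 X u c m n)).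
  { intros m n; destruct m, n; simpl; unfold g34, g23; sm. }
  split; [|split; [|split; [exact HE|split; [|split]]]].
  - intro i; destruct i; simpl; sm.
  - simpl; sm.
  - intros x a H.
    pose (b := fun n => sum3 (fun j => a j * M1 X u c j n x)).
    assert (Hb : forall n, b n = 0).
    { apply (Hfr x b). intro i. rewrite <- (H i). unfold b, sum3; simpl; unfold scale, D1'; ring. }
    pose proof (Hb I1) as B1; pose proof (Hb I2) as B2; pose proof (Hb I3) as B3.
    unfold b, sum3 in B1, B2, B3; simpl in B1, B2, B3.
    pose proof (pos_i1u x) as P.
    assert (A3 : a I3 = 0) by nra.
    rewrite A3 in B2, B3.
    assert (A1 : a I1 = 0) by nra.
    assert (A2 : a I2 = 0) by nra.
    intro j; destruct j; assumption.
  - intro x; unfold Defs.E1; simpl. pose proof (nz_iu1 x). field; split; [apply nz_u|apply nz_1u].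
  - exists (cfc (mD (T1 X u c)) (M1 X u c) (N1 X u c) c). split.
    + apply (frame_change (mD X)); auto. apply Happ1. apply Hinv1; [apply nz_1u|apply nz_u2|apply nz_2u1].
    + intros i x; apply E2_T1.
Qed.
End C1.

End C1.

Module C2.

Definition M2 X u c : i3 -> i3 -> pt -> R := fun m n => match m, n with
 | I1, I3 => fun x => u x / (u x - 1)
 | I2, I2 => fun x => u x / (u x - 1)
 | I3, I1 => fun x => u x / (u x - 1)
 | I3, I2 => fun x => u x / (u x - 1) * - (2 * g34 X c x / (u x - 2))
 | I3, I3 => fun x => u x / (u x - 1) * (2 * u x * g23 X c x / (2 * u x - 1))
 | _, _ => fun _ => 0 end.
Definition N2 X u c : i3 -> i3 -> pt -> R := fun q l => match q, l with
 | I1, I1 => fun x => - (2 * u x * g23 X c x / (2 * u x - 1)) * ((u x - 1) / u x)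
 | I1, I2 => fun x => 2 * g34 X c x / (u x - 2) * ((u x - 1) / u x)
 | I1, I3 => fun x => (u x - 1) / u x
 | I2, I2 => fun x => (u x - 1) / u x
 | I3, I1 => fun x => (u x - 1) / u x
 | _, _ => fun _ => 0 end.

Lemma Happ2 X u c : forall m f x, app (mD (T2 X u c) m) f x = sum3 (fun n => M2 X u c m n x * app (mD X n) f x).
Proof. intros m f x. destruct m; unfold app, sum3, T2, scale, D1'; simpl; ring. Qed.

Lemma Hinv2 X u c : (forall y, u y <> 0) -> (forall y, u y - 1 <> 0) -> (forall y, u y - 2 <> 0) -> (forall y, 2 * u y - 1 <> 0) ->
  forall q p x, sum3 (fun l => N2 X u c q l x * M2 X u c l p x) = if i3_eqb q p then 1 else 0.
Proof. intros H0 H1 H2 H3 q p x. specialize (H0 x); specialize (H1 x); specialize (H2 x); specialize (H3 x).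
  destruct q, p; unfold sum3; simpl; field; auto. Qed.

Section C2.
Variables (X : MC) (u : pt -> R) (c : i3 -> i3 -> i3 -> pt -> R).
Hypothesis Hs : is_struct (mD X) c.
Hypothesis HD : forall i, smooth_vf (mD X i).
Hypothesis Hfr : frame (mD X).
Hypothesis Hxi : smooth (mxi X).
Hypothesis Hu : smooth u.
Hypothesis Hpos : forall y, 1 < u y /\ u y <> 2.
Hypothesis Hg1 : mg X I1 = fun _ => 1/2.
Hypothesis Hg2 : mg X I2 = fun y => 1/2 * (-1 - u y).
Hypothesis Hg3 : mg X I3 = fun y => 1/2 * (-1 - / u y).
Hypothesis HE2 : forall i x, E2 X c i x.
Hypothesis Hc231 : forall x, c I2 I3 I1 x = -2.

Lemma Hcs : forall j k l, smooth (c j k l).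
Proof. apply Hs. Qed.
Lemma nz_u y : u y <> 0. Proof. specialize (Hpos y); lra. Qed.
Lemma nz_1u y : u y - 1 <> 0. Proof. specialize (Hpos y); lra. Qed.
Lemma nz_u2 y : u y - 2 <> 0. Proof. destruct (Hpos y) as [_ Hp]; intro; apply Hp; lra. Qed.
Lemma nz_2u1 y : 2 * u y - 1 <> 0. Proof. specialize (Hpos y); lra. Qed.
Lemma nz_iu1 y : 0 < u y * / (u y - 1).
Proof. specialize (Hpos y). apply Rmult_lt_0_compat; [lra|apply Rinv_0_lt_compat; lra]. Qed.
Lemma pos_i1u y : 0 < u y / (u y - 1).
Proof. apply nz_iu1. Qed.
Lemma nz_u1 y : u y + 1 <> 0. Proof. specialize (Hpos y); lra. Qed.

Ltac nzx := cbv beta; first [apply nz_u | apply nz_1u | apply nz_u2 | apply nz_2u1 | apply nz_iu1 | apply pos_i1u].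
Ltac sm := repeat first [ assumption | apply smooth_const | apply smooth_app | apply Hcs | apply HD | exact (HD _ _)
   | apply smooth_add | apply smooth_sub | apply smooth_opp | apply smooth_mul | apply smooth_inv | apply smooth_ln
   | (intro; nzx) ].
Ltac side := first [ solve [sm] | solve [nzx] ].
Ltac push_in H := repeat first [ rewrite app_const in H | rewrite app_add in H by side | rewrite app_sub in H by side
   | rewrite app_opp in H by side | rewrite app_mul in H by side | rewrite app_inv in H by side | rewrite app_ln in H by side ].
Ltac push := repeat first [ rewrite app_const | rewrite app_add by side | rewrite app_sub by side
   | rewrite app_opp by side | rewrite app_mul by side | rewrite app_inv by side | rewrite app_ln by side ].


Lemma A21 l y : c I2 I1 l y = - c I1 I2 l y. Proof. apply (c_antisym _ _ Hs Hfr). Qed.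
Lemma A32 l y : c I3 I2 l y = - c I2 I3 l y. Proof. apply (c_antisym _ _ Hs Hfr). Qed.
Lemma A13 l y : c I1 I3 l y = - c I3 I1 l y. Proof. apply (c_antisym _ _ Hs Hfr). Qed.
Lemma Add j l y : c j j l y = 0.
Proof. pose proof (c_antisym _ _ Hs Hfr j j l y). lra. Qed.
Lemma Cf : c I2 I3 I1 = fun _ => -2.
Proof. apply functional_extensionality; apply Hc231. Qed.

Ltac canon := repeat first [rewrite A21 | rewrite A32 | rewrite A13 | rewrite Add | rewrite Hc231].
Ltac canon_in H := repeat first [rewrite A21 in H | rewrite A32 in H | rewrite A13 in H | rewrite Add in H | rewrite Hc231 in H].

Lemma HXg i x : app (mD X i) (mxi X) x =
  (app (mD X i) (fun y => mg X (next i) y + mg X (next (next i)) y) x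
   + c i (next i) (next i) x * (mg X i x - mg X (next i) x)
   + c i (next (next i)) (next (next i)) x * (mg X i x - mg X (next (next i)) x)) / (2 * mg X i x).
Proof. pose proof (HE2 i x) as E. unfold E2 in E. apply solve_lin.
  - specialize (Hpos x). destruct i; simpl; rewrite ?Hg1, ?Hg2, ?Hg3; cbv beta.
    + lra.
    + lra.
    + pose proof (Rinv_0_lt_compat (u x) ltac:(lra)). lra.
  - simpl in E |- *. lra. Qed.


Lemma HJ x : app (mD X I3) (c I1 I2 I1) x =
  - (app (mD X I1) (c I2 I3 I1) x + app (mD X I2) (c I3 I1 I1) x
  + sum3 (fun l => c I2 I3 l x * c I1 l I1 x) + sum3 (fun l => c I3 I1 l x * c I2 l I1 x)
  + sum3 (fun l => c I1 I2 l x * c I3 l I1 x)).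
Proof. pose proof (jacobi _ _ Hs HD Hfr I1 x). lra. Qed.

Lemma HC x : app (mD X I3) (app (mD X I2) (mxi X)) x =
  app (mD X I2) (app (mD X I3) (mxi X)) x - sum3 (fun i => c I2 I3 i x * app (mD X i) (mxi X) x).
Proof. destruct Hs as [_ Hb]. rewrite <- (Hb I2 I3 (mxi X) Hxi x). ring. Qed.

Ltac prepX x :=
  pose proof (HXg I1 x) as HX1; pose proof (HXg I2 x) as HX2; pose proof (HXg I3 x) as HX3;
  simpl in HX1, HX2, HX3; rewrite ?Hg1, ?Hg2, ?Hg3 in HX1, HX2, HX3; cbv beta in HX1, HX2, HX3;
  push_in HX1; push_in HX2; push_in HX3; canon_in HX1; canon_in HX2; canon_in HX3;
  pose proof (HJ x) as HJx; rewrite Cf in HJx; push_in HJx; unfold sum3 in HJx; canon_in HJx;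
  pose proof (HC x) as HCx; unfold sum3 in HCx; canon_in HCx.

Lemma E2_T2 i x : E2 (T2 X u c) (cfc (mD (T2 X u c)) (M2 X u c) (N2 X u c) c) i x.
Proof.
  prepX x.
  unfold E2. rewrite !(cfc_eq _ _ _ _ c (Happ2 X u c)). unfold cfcD. rewrite !Happ2.
  destruct i; simpl; unfold sum3; simpl.
  all: rewrite ?Cf; unfold g34, g23, Rdiv; cbv beta; push.
  all: canon; rewrite ?HJx; rewrite ?HCx; rewrite ?HX1, ?HX2, ?HX3.
  all: pose proof (nz_u x); pose proof (nz_1u x); pose proof (nz_u2 x); pose proof (nz_2u1 x);
       pose proof (nz_u1 x).
  all: field; repeat split; auto; specialize (Hpos x); lra.
Qed.

Lemma pre_T2 : MC_pre (T2 X u c).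
Proof.
  assert (HE : forall i, smooth_vf (mD (T2 X u c) i)).
  { intros i j. destruct i; simpl; unfold scale, D1', g34, g23; sm. }
  assert (HM : forall m n, smooth (M2 X u c m n)).
  { intros m n; destruct m, n; simpl; unfold g34, g23; sm. }
  assert (HN : forall m n, smooth (N2 X u c m n)).
  { intros m n; destruct m, n; simpl; unfold g34, g23; sm. }
  split; [|split; [|split; [exact HE|split; [|split]]]].
  - intro i; destruct i; simpl; sm.
  - simpl; sm.
  - intros x a H.
    pose (b := fun n => sum3 (fun j => a j * M2 X u c j n x)).
    assert (Hb : forall n, b n = 0).
    { apply (Hfr x b). intro i. rewrite <- (H i). unfold b, sum3; simpl; unfold scale, D1'; ring. }
    pose proof (Hb I1) as B1; pose proof (Hb I2) as B2; pose proof (Hb I3) as B3.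
    unfold b, sum3 in B1, B2, B3; simpl in B1, B2, B3.
    pose proof (pos_i1u x) as P.
    assert (A3 : a I3 = 0) by nra.
    rewrite A3 in B2, B3.
    assert (A1 : a I1 = 0) by nra.
    assert (A2 : a I2 = 0) by nra.
    intro j; destruct j; assumption.
  - intro x; unfold Defs.E1; simpl. pose proof (nz_1u x). field; auto.
  - exists (cfc (mD (T2 X u c)) (M2 X u c) (N2 X u c) c). split.
    + apply (frame_change (mD X)); auto. apply Happ2. apply Hinv2; [apply nz_u|apply nz_1u|apply nz_u2|apply nz_2u1].
    + intros i x; apply E2_T2.
Qed.
End C2.

End C2.

Theorem theorem6p10 (X : MC) (u : pt -> R) (c : i3 -> i3 -> i3 -> pt -> R) :
  MC_normal X ->
  (forall x, mg X I2 x = 1/2 * (-1 - u x)) ->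
  is_struct (mD X) c ->
  ((forall x, 0 < u x < 1 /\ u x <> 1/2) ->
     MC_pre (T1 X u c) /\ (forall Z, N_rel (T1 X u c) Z -> MC_normal Z)) /\
  ((forall x, 1 < u x /\ u x <> 2) ->
     MC_pre (T2 X u c) /\ (forall Z, N_rel (T2 X u c) Z -> MC_normal Z)).
Proof.
  intros HNX HuX Hs.
  destruct HNX as [Hpre [[u0 [Hu0s [Hu0p Hgu]]] Hc231']].
  destruct Hpre as [Hgs [Hxis [HDs [Hfr [HE1 [c0 [Hs0 HE2']]]]]]].
  assert (Eu : u = u0).
  { apply functional_extensionality; intro x. pose proof (HuX x). destruct (Hgu x) as [_ [H2 _]]. lra. }
  subst u0.
  assert (Hg1 : mg X I1 = fun _ => 1/2) by (apply functional_extensionality; intro x; apply (Hgu x)).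
  assert (Hg2 : mg X I2 = fun y => 1/2 * (-1 - u y)) by (apply functional_extensionality; intro x; apply (Hgu x)).
  assert (Hg3 : mg X I3 = fun y => 1/2 * (-1 - / u y)) by (apply functional_extensionality; intro x; apply (Hgu x)).
  assert (HE2 : forall i x, E2 X c i x).
  { intros i x. pose proof (HE2' i x) as H. unfold E2 in *.
    rewrite !(struct_unique _ _ _ Hfr Hs Hs0) in H. exact H. }
  assert (Hc231 : forall x, c I2 I3 I1 x = -2) by (apply Hc231'; exact Hs).
  split; intro Hp; split.
  - exact (C1.pre_T1 X u c Hs HDs Hfr Hxis Hu0s Hp Hg1 Hg2 Hg3 HE2 Hc231).
  - intros Z HZ. destruct HZ as (_&_&A&B&sg&_&_&_&_&_&_&_&HZ). exact HZ.
  - exact (C2.pre_T2 X u c Hs HDs Hfr Hxis Hu0s Hp Hg1 Hg2 Hg3 HE2 Hc231).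
  - intros Z HZ. destruct HZ as (_&_&A&B&sg&_&_&_&_&_&_&_&HZ). exact HZ.
Qed.
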